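(* Let $D$ be an integral domain. Then every nonzero prime ideal of $R(D)$ is an intersection of ideals of the form $\mathfrak p_f$ with $f\in D\setminus\{0\}$.
   Context: For an integral domain $D$ with fraction field $F$, the reciprocal complement $R(D)$ is the subring of $F$ generated by all $1/d$, $d\in D\setminus\{0\}$. For nonzero $f\in D$, $\mathfrak p_f$ denotes the unique prime ideal of $R(D)$ maximal with respect to not containing $1/f$. *)

(* Defs.v *)
From HB Require Import structures.
From mathcomp Require Import all_boot all_order all_algebra.
From mathcomp Require Import fraction.
Set Implicit Arguments. Unset Strict Implicit. Unset Printing Implicit Defensive.
Import Order.TTheory GRing.Theory Num.Theory.
Local Open Scope ring_scope.

Definition emb (D : idomainType) (d : D) : {fraction D} := @FracField.tofrac D d.

(* The reciprocal complement R(D): the subring of the fraction field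
   generated by all 1/d, d in D \ {0} (smallest set containing these
   elements and closed under the ring operations). *)
Inductive RC (D : idomainType) : {fraction D} -> Prop :=
| RC_inv (d : D) : d != 0 -> RC (emb d)^-1
| RC_0 : RC 0
| RC_1 : RC 1
| RC_opp x : RC x -> RC (- x)
| RC_add x y : RC x -> RC y -> RC (x + y)
| RC_mul x y : RC x -> RC y -> RC (x * y).

Definition is_ideal (D : idomainType) (I : {fraction D} -> Prop) : Prop :=
  (forall x, I x -> RC x) /\ I 0 /\
  (forall x y, I x -> I y -> I (x + y)) /\
  (forall r x, RC r -> I x -> I (r * x)).

Definition is_prime_ideal (D : idomainType) (P : {fraction D} -> Prop) : Prop :=
  is_ideal P /\ ~ P 1 /\
  (forall a b, RC a -> RC b -> P (a * b) -> P a \/ P b).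

Definition maximal_avoiding (D : idomainType) (f : D) (P : {fraction D} -> Prop) : Prop :=
  is_prime_ideal P /\ ~ P (emb f)^-1 /\
  (forall Q, is_prime_ideal Q -> ~ Q (emb f)^-1 ->
     (forall x, P x -> Q x) -> forall x, Q x -> P x).

Definition is_p_f (D : idomainType) (f : D) (P : {fraction D} -> Prop) : Prop :=
  maximal_avoiding f P /\
  (forall Q, maximal_avoiding f Q -> forall x, Q x <-> P x).

(* Main.v *)
Require Import Defs.
From HB Require Import structures.
From mathcomp Require Import all_boot all_order all_algebra.
From mathcomp Require Import fraction.
From Stdlib Require Import Classical.
From mathcomp Require Import ring.
Set Implicit Arguments. Unset Strict Implicit. Unset Printing Implicit Defensive.
Import GRing.Theory.
Local Open Scope ring_scope.

Inductive RR (F : fieldType) (A : F -> Prop) : F -> Prop :=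
| RR_inv a : A a -> a != 0 -> RR A a^-1
| RR_0 : RR A 0
| RR_1 : RR A 1
| RR_opp x : RR A x -> RR A (- x)
| RR_add x y : RR A x -> RR A y -> RR A (x + y)
| RR_mul x y : RR A x -> RR A y -> RR A (x * y).

Definition subr (F : fieldType) (A : F -> Prop) :=
  A 1 /\ (forall x, A x -> A (- x)) /\ (forall x y, A x -> A y -> A (x + y))
  /\ (forall x y, A x -> A y -> A (x * y)).

Definition uni (F : fieldType) (A : F -> Prop) x :=
  RR A x /\ exists v, RR A v /\ x * v = 1.

Fixpoint sumi (F : fieldType) (l : seq F) : F :=
  if l is a :: l' then a^-1 + sumi l' else 0.
Fixpoint prodl (F : fieldType) (l : seq F) : F :=
  if l is a :: l' then a * prodl l' else 1.

Definition good (F : fieldType) (A : F -> Prop) (l : seq F) :=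
  forall a, a \in l -> A a /\ a != 0.

Lemma good_cons (F : fieldType) (A : F -> Prop) a l :
  good A (a :: l) <-> (A a /\ a != 0) /\ good A l.
Proof.
split.
- move=> H; split; first by apply: H; rewrite inE eqxx.
  by move=> b Hb; apply: H; rewrite inE Hb orbT.
- move=> [H1 H2] b; rewrite inE => /orP [/eqP -> //|]; exact: H2.
Qed.

Lemma good_nil (F : fieldType) (A : F -> Prop) : good A [::].
Proof. by []. Qed.

Lemma RR_sumi (F : fieldType) (A : F -> Prop) l : good A l -> RR A (sumi l).
Proof.
elim: l => [|a l IH] /=; first by move=> _; exact: RR_0.
move/good_cons=> [[Ha Ha0] Hl]; apply: RR_add; [exact: RR_inv | exact: IH].
Qed.

Lemma sumi_cat (F : fieldType) (l1 l2 : seq F) : sumi (l1 ++ l2) = sumi l1 + sumi l2.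
Proof. by elim: l1 => [|a l IH] /=; rewrite ?add0r // IH addrA. Qed.

Lemma prodl_cat (F : fieldType) (l1 l2 : seq F) : prodl (l1 ++ l2) = prodl l1 * prodl l2.
Proof. by elim: l1 => [|a l IH] /=; rewrite ?mul1r // IH mulrA. Qed.

Lemma good_cat (F : fieldType) (A : F -> Prop) l1 l2 :
  good A l1 -> good A l2 -> good A (l1 ++ l2).
Proof. by move=> H1 H2 a; rewrite mem_cat => /orP [] ?; [apply: H1|apply: H2]. Qed.

Lemma sumi_rem (F : fieldType) (l : seq F) a : a \in l -> sumi l = a^-1 + sumi (rem a l).
Proof.
elim: l => [|b l IH] //=; rewrite inE.
case: eqVneq => [-> //|Hne] /= Hin.
by rewrite IH // addrCA.
Qed.

Lemma good_rem (F : fieldType) (A : F -> Prop) l a : good A l -> good A (rem a l).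
Proof. by move=> H b Hb; apply: H; apply: (mem_rem Hb). Qed.

Lemma subr0 (F : fieldType) (A : F -> Prop) : subr A -> A 0.
Proof. move=> [H1 [HN [HD HM]]]; rewrite -(subrr 1); apply: HD => //; exact: HN. Qed.

Lemma A_prodl (F : fieldType) (A : F -> Prop) l : subr A -> good A l -> A (prodl l).
Proof.
move=> HA; elim: l => [|a l IH] /=; first by case: HA.
move/good_cons=> [[Ha _] Hl]; case: HA => [_ [_ [_ HM]]]; apply: (HM a (prodl l)) => //; exact: IH.
Qed.

Lemma prodl_neq0 (F : fieldType) (A : F -> Prop) l : good A l -> prodl l != 0.
Proof.
elim: l => [|a l IH] /=; first by rewrite oner_eq0.
move/good_cons=> [[_ Ha] Hl]; rewrite mulf_eq0 negb_or Ha /=; exact: IH.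
Qed.

Lemma A_sumprod (F : fieldType) (A : F -> Prop) l : subr A -> good A l ->
  A (sumi l * prodl l).
Proof.
move=> HA; elim: l => [|a l IH] /=; first by move=> _; rewrite mul0r; exact: (subr0 HA).
move/good_cons=> [[Ha Ha0] Hl].
have -> : (a^-1 + sumi l) * (a * prodl l) = prodl l + a * (sumi l * prodl l).
  by rewrite mulrDl [X in X + _]mulrA mulVf // mul1r mulrCA.
have Hp := A_prodl HA Hl; case: HA => [H1 [HN [HD HM]]]; apply: HD => //.
apply: (HM a) => //; exact: IH.
Qed.

Lemma RR_prodl (F : fieldType) (A : F -> Prop) l :
  (forall a, a \in l -> RR A a) -> RR A (prodl l).
Proof.
elim: l => [|a l IH] /= H; first exact: RR_1.
apply: RR_mul; first by apply: H; rewrite inE eqxx.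
by apply: IH => b Hb; apply: H; rewrite inE Hb orbT.
Qed.

Lemma prodl_inv (F : fieldType) (l : seq F) : prodl [seq a^-1 | a <- l] = (prodl l)^-1.
Proof. by elim: l => [|a l IH] /=; rewrite ?invr1 // IH invfM. Qed.

Definition unitmod (F : fieldType) (A : F -> Prop) u x :=
  exists y r, RR A y /\ RR A r /\ x * y = 1 + u * r.

Lemma unitmod_prod (F : fieldType) (A : F -> Prop) u l : RR A u ->
  (forall a, a \in l -> unitmod A u a) -> unitmod A u (prodl l).
Proof.
move=> Hu; elim: l => [|a l IH] /= H.
  by exists 1, 0; split; [exact: RR_1|split; [exact: RR_0|rewrite mulr0 addr0 mulr1]].
have [y1 [r1 [Hy1 [Hr1 E1]]]] : unitmod A u a by apply: H; rewrite inE eqxx.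
have [y2 [r2 [Hy2 [Hr2 E2]]]] : unitmod A u (prodl l).
  by apply: IH => b Hb; apply: H; rewrite inE Hb orbT.
exists (y1 * y2), (r1 + r2 + u * r1 * r2); split; first exact: RR_mul.
split; first by apply: RR_add; [exact: RR_add | apply: RR_mul => //; exact: RR_mul].
have -> : a * prodl l * (y1 * y2) = (a * y1) * (prodl l * y2) by rewrite mulrACA.
rewrite E1 E2; ring.
Qed.

Lemma core_step (F : fieldType) (A : F -> Prop) (w B : F) l : subr A ->
  RR A B -> A B -> B != 0 -> A (w * B) -> RR A w -> good A l ->
  (forall a, a \in l -> uni A (w + sumi l - a^-1)) -> w + sumi l != 0 ->
  uni A (w + sumi l).
Proof.
move=> HA HRB HAB HB0 HwB HRw Hl Hrem Hu0.
set u := w + sumi l.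
have HRu : RR A u by apply: RR_add => //; exact: RR_sumi.
have HP0 := prodl_neq0 Hl.
have HX : A (u * B * prodl l).
  have -> : u * B * prodl l = (w * B) * prodl l + B * (sumi l * prodl l)
    by rewrite /u; ring.
  case: (HA) => [_ [_ [HD HM]]]; apply: HD; apply: HM => //;
    [exact: A_prodl | exact: A_sumprod].
have HX0 : u * B * prodl l != 0 by rewrite !mulf_neq0.
have Hz := RR_inv HX HX0.
have Euz : prodl [seq a^-1 | a <- l] = u * (B * (u * B * prodl l)^-1).
  rewrite prodl_inv !invfM; field.
  by rewrite Hu0 HB0 HP0.
have [Y [R [HY [HR EY]]]] : unitmod A u (prodl [seq a^-1 | a <- l]).
  apply: unitmod_prod => // b /mapP [a Ha ->].
  have [_ [v [Hv Ev]]] := Hrem a Ha.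
  exists (- v), (- v); split; first exact: RR_opp.
  split; first exact: RR_opp.
  rewrite -/u in Ev; rewrite -[1]Ev; ring.
split => //; exists (B * (u * B * prodl l)^-1 * Y - R); split.
  apply: RR_add; last exact: RR_opp.
  by apply: RR_mul => //; apply: RR_mul.
have : u * (B * (u * B * prodl l)^-1) * Y = 1 + u * R by rewrite -Euz.
move=> E; transitivity (u * (B * (u * B * prodl l)^-1) * Y - u * R); first ring.
rewrite E; ring.
Qed.

Lemma core (F : fieldType) (A : F -> Prop) (w B : F) : subr A ->
  RR A B -> A B -> B != 0 -> A (w * B) -> RR A w -> w != 0 ->
  forall n l, size l = n -> good A l -> (forall a, a \in l -> ~ RR A a) ->
  uni A (w + sumi l).
Proof.
move=> HA HRB HAB HB0 HwB HRw Hw0; elim=> [|n IH] l.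
  case: l => // _ _ _; apply: (core_step (B:=B)) => //; by rewrite /= addr0.
move=> Hs Hl Hn.
have Hrem : forall a, a \in l -> uni A (w + sumi l - a^-1).
  move=> a Ha; rewrite (sumi_rem Ha).
  have -> : w + (a^-1 + sumi (rem a l)) - a^-1 = w + sumi (rem a l) by ring.
  apply: IH; first by rewrite size_rem // Hs.
    exact: good_rem.
  by move=> b Hb; apply: Hn; apply: (mem_rem Hb).
apply: (core_step (B:=B)) => //.
apply/negP => /eqP E.
case: l Hs Hl Hn Hrem E => // a l _ Hl Hn Hrem E.
have [_ [v [Hv Ev]]] := Hrem a (mem_head a l).
move: Ev; rewrite E sub0r => Ev.
have Ha0 : a != 0 by case: (Hl a (mem_head a l)).
apply: (Hn a (mem_head a l)).
have -> : a = - v.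
  have H : a * (- a^-1 * v) = a by rewrite Ev mulr1.
  by rewrite -{1}H mulNr mulrN mulrA mulfV // mul1r.
exact: RR_opp.
Qed.

Lemma sumi_opp (F : fieldType) (l : seq F) : sumi [seq - a | a <- l] = - sumi l.
Proof. by elim: l => [|a l IH] /=; rewrite ?oppr0 // IH invrN opprD. Qed.

Lemma sumi_mull (F : fieldType) (a : F) (l : seq F) :
  sumi [seq a * b | b <- l] = a^-1 * sumi l.
Proof. by elim: l => [|b l IH] /=; rewrite ?mulr0 // IH invfM mulrDr. Qed.

Lemma good_opp (F : fieldType) (A : F -> Prop) l : subr A -> good A l ->
  good A [seq - a | a <- l].
Proof.
move=> [_ [HN _]] Hl b /mapP [a Ha ->]; have [H1 H2] := Hl a Ha.
by split; [exact: HN | rewrite oppr_eq0].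
Qed.

Lemma good_mull (F : fieldType) (A : F -> Prop) a l : subr A -> A a -> a != 0 ->
  good A l -> good A [seq a * b | b <- l].
Proof.
move=> [_ [_ [_ HM]]] Ha Ha0 Hl c /mapP [b Hb ->]; have [H1 H2] := Hl b Hb.
by split; [exact: HM | rewrite mulf_neq0].
Qed.

Lemma rep_mul (F : fieldType) (A : F -> Prop) l1 l2 : subr A -> good A l1 -> good A l2 ->
  exists l, good A l /\ sumi l1 * sumi l2 = sumi l.
Proof.
move=> HA; elim: l1 => [|a l1 IH] /=.
  by move=> _ _; exists [::]; rewrite mul0r.
move/good_cons => [[Ha Ha0] H1] H2.
have [l [Hl E]] := IH H1 H2.
exists ([seq a * b | b <- l2] ++ l); split.
  by apply: good_cat => //; exact: good_mull.
by rewrite sumi_cat sumi_mull -E mulrDl.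
Qed.

Lemma rep (F : fieldType) (A : F -> Prop) x : subr A -> RR A x ->
  exists l, good A l /\ x = sumi l.
Proof.
move=> HA; elim.
- move=> a Ha Ha0; exists [:: a]; split; last by rewrite /= addr0.
  by apply/good_cons; split.
- by exists [::].
- exists [:: 1]; split; last by rewrite /= invr1 addr0.
  by apply/good_cons; split; [split; [case: HA | exact: oner_neq0] | ].
- move=> y _ [l [Hl ->]]; exists [seq - a | a <- l]; split; last by rewrite sumi_opp.
  exact: good_opp.
- move=> y z _ [l1 [H1 ->]] _ [l2 [H2 ->]]; exists (l1 ++ l2).
  by rewrite sumi_cat; split => //; exact: good_cat.
- move=> y z _ [l1 [H1 ->]] _ [l2 [H2 ->]]; exact: rep_mul.
Qed.

Lemma split_rr (F : fieldType) (A : F -> Prop) l : good A l ->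
  exists lb la, good A lb /\ good A la /\ (forall b, b \in lb -> RR A b) /\
    (forall a, a \in la -> ~ RR A a) /\ sumi l = sumi lb + sumi la.
Proof.
elim: l => [|c l IH].
  by move=> _; exists [::], [::]; rewrite /= addr0.
move/good_cons => [Hc Hl]; have [lb [la [Hb [Ha [Hb' [Ha' E]]]]]] := IH Hl.
case: (classic (RR A c)) => Hrc.
- exists (c :: lb), la; split; first by apply/good_cons.
  split => //; split.
    by move=> b; rewrite inE => /orP [/eqP -> //|]; exact: Hb'.
  by split => //=; rewrite E addrA.
- exists lb, (c :: la); split => //; split; first by apply/good_cons.
  split => //; split.
    by move=> a; rewrite inE => /orP [/eqP -> //|]; exact: Ha'.
  by rewrite /= E addrCA.
Qed.

Lemma local (F : fieldType) (A : F -> Prop) x : subr A -> RR A x ->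
  uni A x \/ uni A (1 - x).
Proof.
move=> HA Hx; have [l [Hl Ex]] := rep HA Hx.
have [lb [la [Hb [Ha [Hb' [Ha' E]]]]]] := split_rr Hl.
have HRw := RR_sumi Hb.
case: (eqVneq (sumi lb) 0) => Hw0.
- right.
  have -> : 1 - x = 1 + sumi [seq - a | a <- la] by rewrite sumi_opp Ex E Hw0 add0r.
  have H1 : A 1 by case: HA.
  apply: (core (B:=1)) (erefl _) _ _ => //.
  + exact: RR_1.
  + exact: oner_neq0.
  + by rewrite mulr1.
  + exact: RR_1.
  + exact: oner_neq0.
  + exact: good_opp.
  + move=> b /mapP [a Hain ->] H; apply: (Ha' a Hain).
    by rewrite -[a]opprK; apply: RR_opp.
- left; rewrite Ex E.
  apply: (core (B:=prodl lb)) (erefl _) _ _ => //.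
  + exact: RR_prodl.
  + exact: A_prodl.
  + exact: (prodl_neq0 Hb).
  + exact: A_sumprod.
Qed.

Lemma nonunit_add (F : fieldType) (A : F -> Prop) x y : subr A -> RR A x -> RR A y ->
  uni A (x + y) -> uni A x \/ uni A y.
Proof.
move=> HA Hx Hy [_ [v [Hv E]]].
have := local HA (RR_mul Hx Hv); case => [[_ [z [Hz Ez]]]|[_ [z [Hz Ez]]]].
- left; split => //; exists (v * z); split; first exact: RR_mul.
  by rewrite mulrA.
- right; split => //; exists (v * z); split; first exact: RR_mul.
  by rewrite -Ez -E; ring.
Qed.

Lemma hadd (F : fieldType) (a b c : F) k j : c != 0 ->
  a / c ^+ k + b / c ^+ j = (a * c ^+ j + b * c ^+ k) / c ^+ (k + j).
Proof. move=> Hc; rewrite exprD; field; by rewrite !expf_neq0. Qed.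

Lemma hmul (F : fieldType) (a b c : F) k j :
  a / c ^+ k * (b / c ^+ j) = (a * b) / c ^+ (k + j).
Proof. rewrite exprD invfM; ring. Qed.

Lemma hstruct (F : fieldType) (r s c : F) n m : c != 0 ->
  r * c ^+ n + s * c ^+ m = (r * (c^-1) ^+ m + s * (c^-1) ^+ n) * c ^+ (n + m).
Proof. move=> Hc; rewrite exprD !exprVn; field; by rewrite !expf_neq0. Qed.

Lemma hsmul (F : fieldType) (r s c : F) n m :
  r * c ^+ n * (s * c ^+ m) = r * s * c ^+ (n + m).
Proof. rewrite exprD; ring. Qed.

Definition Ad (D : idomainType) : {fraction D} -> Prop := fun z => exists d, z = emb d.
Definition Af (D : idomainType) (f : D) : {fraction D} -> Prop :=
  fun z => exists d k, z = emb d / (emb f) ^+ k.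

Lemma emb_neq0 (D : idomainType) (d : D) : (emb d != 0) = (d != 0).
Proof. by rewrite /emb tofrac_eq0. Qed.

Lemma subr_Ad (D : idomainType) : subr (@Ad D).
Proof.
split; first by exists 1; rewrite /emb tofrac1.
split; first by move=> x [d ->]; exists (- d); rewrite /emb tofracN.
split; first by move=> x y [d ->] [e ->]; exists (d + e); rewrite /emb tofracD.
by move=> x y [d ->] [e ->]; exists (d * e); rewrite /emb tofracM.
Qed.

Lemma subr_Af (D : idomainType) (f : D) : f != 0 -> subr (Af f).
Proof.
move=> Hf; have HF : emb f != 0 by rewrite emb_neq0.
split; first by exists 1, 0%N; rewrite /emb tofrac1 expr0 divr1.
split; first by move=> x [d [k ->]]; exists (- d), k; rewrite /emb tofracN mulNr.
split.
  move=> x y [d [k ->]] [e [j ->]]; exists (d * f ^+ j + e * f ^+ k), (k + j)%N.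
  by rewrite hadd // /emb tofracD !tofracM !tofracXn.
move=> x y [d [k ->]] [e [j ->]]; exists (d * e), (k + j)%N.
by rewrite hmul /emb tofracM.
Qed.

Lemma RC_RR (D : idomainType) (f : D) x : RC x -> RR (Af f) x.
Proof.
elim.
- move=> d Hd; apply: RR_inv; last by rewrite emb_neq0.
  by exists d, 0%N; rewrite expr0 divr1.
- exact: RR_0.
- exact: RR_1.
- by move=> y _ H; apply: RR_opp.
- by move=> y z _ H1 _ H2; apply: RR_add.
- by move=> y z _ H1 _ H2; apply: RR_mul.
Qed.

Lemma RC_RRd (D : idomainType) x : RC x -> RR (@Ad D) x.
Proof.
elim.
- move=> d Hd; apply: RR_inv; last by rewrite emb_neq0.
  by exists d.
- exact: RR_0.
- exact: RR_1.
- by move=> y _ H; apply: RR_opp.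
- by move=> y z _ H1 _ H2; apply: RR_add.
- by move=> y z _ H1 _ H2; apply: RR_mul.
Qed.

Lemma RC_exp (D : idomainType) (x : {fraction D}) n : RC x -> RC (x ^+ n).
Proof.
move=> Hx; elim: n => [|n IH]; first by rewrite expr0; exact: RC_1.
by rewrite exprS; apply: RC_mul.
Qed.

Lemma RR_struct (D : idomainType) (f : D) z : f != 0 -> RR (Af f) z ->
  exists r n, RC r /\ z = r * (emb f) ^+ n.
Proof.
move=> Hf; have HF : emb f != 0 by rewrite emb_neq0.
have HRf : RC (emb f)^-1 by apply: RC_inv.
elim.
- move=> a [d [k ->]] Ha0.
  have Hd : d != 0.
    by apply/negP => /eqP Hd; move: Ha0; rewrite Hd /emb tofrac0 mul0r eqxx.
  exists (emb d)^-1, k; split; first exact: RC_inv.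
  rewrite invfM invrK mulrC //.
- by exists 0, 0%N; split; [exact: RC_0 | rewrite mul0r].
- by exists 1, 0%N; split; [exact: RC_1 | rewrite mul1r expr0].
- move=> y _ [r [n [Hr ->]]]; exists (- r), n; split; last by rewrite mulNr.
  exact: RC_opp.
- move=> y y2 _ [r [n [Hr ->]]] _ [s [m [Hs ->]]].
  exists (r * ((emb f)^-1) ^+ m + s * ((emb f)^-1) ^+ n), (n + m)%N; split.
    by apply: RC_add; apply: RC_mul => //; apply: RC_exp.
  exact: hstruct.
- move=> y y2 _ [r [n [Hr ->]]] _ [s [m [Hs ->]]].
  exists (r * s), (n + m)%N; split; first exact: RC_mul.
  exact: hsmul.
Qed.

Definition pf (D : idomainType) (f : D) : {fraction D} -> Prop :=
  fun x => RC x /\ ~ uni (Af f) x.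

Lemma pf_prime (D : idomainType) (f : D) : f != 0 -> is_prime_ideal (pf f).
Proof.
move=> Hf; have HA := subr_Af Hf.
split; [split; [|split; [|split]] | split].
- by move=> x [].
- split; first exact: RC_0.
  by move=> [_ [v [_ E]]]; move: E; rewrite mul0r => /eqP; rewrite eq_sym oner_eq0.
- move=> x y [Hx Ux] [Hy Uy]; split; first exact: RC_add.
  move=> U; have [] := nonunit_add HA (RC_RR f Hx) (RC_RR f Hy) U; by [].
- move=> r x Hr [Hx Ux]; split; first exact: RC_mul.
  move=> [_ [v [Hv E]]]; apply: Ux; split; first exact: RC_RR.
  exists (r * v); split; first by apply: RR_mul => //; exact: RC_RR.
  by rewrite -E mulrA (mulrC x r).
- move=> [_ U]; apply: U; split; first exact: RR_1.
  by exists 1; split; [exact: RR_1 | rewrite mulr1].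
- move=> a b Ha Hb [Hab Uab].
  case: (classic (uni (Af f) a)) => Ua; last by left.
  case: (classic (uni (Af f) b)) => Ub; last by right.
  exfalso; apply: Uab; case: Ua => [Ra [va [Hva Ea]]]; case: Ub => [Rb [vb [Hvb Eb]]].
  split; first exact: RR_mul.
  exists (va * vb); split; first exact: RR_mul.
  by rewrite mulrACA Ea Eb mulr1.
Qed.

Lemma pf_avoid (D : idomainType) (f : D) : f != 0 -> ~ pf f (emb f)^-1.
Proof.
move=> Hf [_ U]; apply: U; have HF : emb f != 0 by rewrite emb_neq0.
split; first by apply: RC_RR; apply: RC_inv.
exists (emb f); split; last by rewrite mulVf.
rewrite -[emb f]invrK; apply: RR_inv; last by rewrite invr_eq0.
by exists 1, 1%N; rewrite expr1 /emb tofrac1 div1r.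
Qed.

Lemma prime_pow (D : idomainType) (Q : {fraction D} -> Prop) y n :
  is_prime_ideal Q -> RC y -> ~ Q y -> ~ Q (y ^+ n).
Proof.
move=> [HI [H1 Hp]] Hy HQ; elim: n => [|n IH]; first by rewrite expr0.
rewrite exprS => H; case: (Hp _ _ Hy (RC_exp n Hy) H) => //.
Qed.

Lemma pf_max (D : idomainType) (f : D) (Q : {fraction D} -> Prop) :
  f != 0 -> is_prime_ideal Q -> ~ Q (emb f)^-1 -> forall x, Q x -> pf f x.
Proof.
move=> Hf HQ HQf x Hx; have HF : emb f != 0 by rewrite emb_neq0.
have [[HQR [HQ0 [HQD HQM]]] _] := HQ.
split; first exact: HQR.
move=> [_ [v [Hv E]]].
have [r [n [Hr Ev]]] := RR_struct Hf Hv.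
have : Q (r * x) by apply: HQM.
have -> : r * x = ((emb f)^-1) ^+ n.
  rewrite exprVn; apply: (@mulIf _ ((emb f) ^+ n)); first by rewrite expf_neq0.
  by rewrite mulVf ?expf_neq0 // -E Ev [RHS]mulrA (mulrC x r).
apply: prime_pow => //; exact: RC_inv.
Qed.

Lemma pf_is_p_f (D : idomainType) (f : D) : f != 0 -> is_p_f f (pf f).
Proof.
move=> Hf.
have Hm : maximal_avoiding f (pf f).
  split; first exact: pf_prime.
  split; first exact: pf_avoid.
  by move=> Q HQ HQf _; apply: pf_max.
split => // Q [HQ [HQf HQm]] x; split; first by apply: pf_max.
by apply: (HQm (pf f)) => //; [exact: pf_prime | exact: pf_avoid | apply: pf_max].
Qed.

Lemma split_P (F : fieldType) (A : F -> Prop) (Pr : F -> Prop) l : good A l ->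
  exists lb la, good A lb /\ good A la /\ (forall b, b \in lb -> Pr b) /\
    (forall a, a \in la -> ~ Pr a) /\ sumi l = sumi lb + sumi la.
Proof.
elim: l => [|c l IH].
  by move=> _; exists [::], [::]; rewrite /= addr0.
move/good_cons => [Hc Hl]; have [lb [la [Hb [Ha [Hb' [Ha' E]]]]]] := IH Hl.
case: (classic (Pr c)) => Hrc.
- exists (c :: lb), la; split; first by apply/good_cons.
  split => //; split.
    by move=> b; rewrite inE => /orP [/eqP -> //|]; exact: Hb'.
  by split => //=; rewrite E addrA.
- exists lb, (c :: la); split => //; split; first by apply/good_cons.
  split => //; split.
    by move=> a; rewrite inE => /orP [/eqP -> //|]; exact: Ha'.
  by rewrite /= E addrCA.
Qed.

Lemma RC_invAd (D : idomainType) (a : {fraction D}) : Ad a -> a != 0 -> RC a^-1.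
Proof. move=> [d ->]; rewrite emb_neq0; exact: RC_inv. Qed.

Lemma RC_sumi (D : idomainType) (l : seq {fraction D}) : good (@Ad D) l -> RC (sumi l).
Proof.
elim: l => [|a l IH] /=; first by move=> _; exact: RC_0.
move/good_cons => [[Ha Ha0] Hl]; apply: RC_add; [exact: RC_invAd | exact: IH].
Qed.

Lemma P_sumi (D : idomainType) (P : {fraction D} -> Prop) l : is_ideal P ->
  (forall a, a \in l -> P a^-1) -> P (sumi l).
Proof.
move=> [_ [H0 [HD _]]]; elim: l => [|a l IH] //= H.
apply: HD; first by apply: H; rewrite inE eqxx.
by apply: IH => b Hb; apply: H; rewrite inE Hb orbT.
Qed.

Lemma notP_prod (D : idomainType) (P : {fraction D} -> Prop) l : is_prime_ideal P ->
  good (@Ad D) l -> (forall a, a \in l -> ~ P a^-1) ->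
  RC (prodl [seq a^-1 | a <- l]) /\ ~ P (prodl [seq a^-1 | a <- l]).
Proof.
move=> [HI [H1 Hp]]; elim: l => [|a l IH] /=; first by move=> _ _; split => //; exact: RC_1.
move/good_cons => [[Ha Ha0] Hl] H.
have [HR HN] : RC (prodl [seq a^-1 | a <- l]) /\ ~ P (prodl [seq a^-1 | a <- l]).
  by apply: IH => // b Hb; apply: H; rewrite inE Hb orbT.
have Hra := RC_invAd Ha Ha0.
split; first exact: RC_mul.
move=> /(Hp _ _ Hra HR) [H2|H2]; last exact: HN.
by apply: (H a); rewrite ?inE ?eqxx.
Qed.

Theorem mainTheorem17 (D : idomainType) (P : {fraction D} -> Prop) :
  is_prime_ideal P -> (exists x, P x /\ x != 0) ->
  exists Fam : ({fraction D} -> Prop) -> Prop,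
    (forall Q, Fam Q -> exists f : D, f != 0 /\ is_p_f f Q) /\
    (forall x, P x <-> (RC x /\ forall Q, Fam Q -> Q x)).
Proof.
move=> HP _.
exists (fun Q => exists f : D, f != 0 /\ ~ P (emb f)^-1 /\ Q = pf f).
split.
  move=> Q [f [Hf [_ ->]]]; exists f; split => //; exact: pf_is_p_f.
move=> x; split.
  move=> Hx; split; first by case: HP => [[HR _] _]; exact: HR.
  by move=> Q [f [Hf [HPf ->]]]; apply: (pf_max Hf HP HPf).
move=> [Hx HQ]; apply: NNPP => HnP.
have [l [Hl Ex]] := rep (subr_Ad D) (RC_RRd Hx).
have [lb [lg [Hb [Hg [Hb' [Hg' E]]]]]] := split_P (fun a => P a^-1) Hl.
have [f Ef] : Ad (prodl lg) by apply: A_prodl => //; exact: subr_Ad.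
have HF : emb f != 0 by rewrite -Ef; exact: (prodl_neq0 Hg).
have Hf : f != 0 by rewrite -emb_neq0.
have HPf : ~ P (emb f)^-1.
  by rewrite -Ef -prodl_inv; case: (notP_prod HP Hg Hg').
have Hpi : P (sumi lb) by apply: P_sumi => //; case: HP.
have Hl0 : sumi lg != 0.
  apply/negP => /eqP H0; apply: HnP; by rewrite Ex E H0 addr0.
have Hul : uni (Af f) (sumi lg).
  split; first by apply: RC_RR; exact: RC_sumi.
  have [N EN] : Ad (sumi lg * prodl lg) by apply: A_sumprod => //; exact: subr_Ad.
  have HN0 : emb N != 0 by rewrite -EN mulf_neq0 // Ef.
  exists (emb f * (emb N)^-1); split.
    apply: RR_mul.
      rewrite -[emb f]invrK; apply: RR_inv; last by rewrite invr_eq0.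
      by exists 1, 1%N; rewrite expr1 /emb tofrac1 div1r.
    apply: RR_inv => //; by exists N, 0%N; rewrite expr0 divr1.
  by rewrite -EN Ef mulrA mulfV // mulf_neq0 // -Ef.
have Hpfx : pf f x by apply: HQ; exists f.
have [[_ [_ [HD HM]]] _] := pf_prime Hf.
have Hpipf : pf f (sumi lb) by apply: (pf_max Hf HP HPf).
have : pf f (x + (-1) * sumi lb).
  apply: HD => //; apply: HM => //; apply: RC_opp; exact: RC_1.
rewrite mulN1r Ex E addrAC subrr add0r => [[_]]; by [].
Qed.
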